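(* The set $\{A(\mathbf j,r)\mid A\in\Xi^\pm(\infty),\ \mathbf j\in\mathbb N^\infty,\ \sigma(\mathbf j)+\sigma(A)\le r\}$ is a $\mathbb Q(v)$-basis of $\mathbf V(\infty,r)$.
   Context: $v$ indeterminate, $\mathcal Z=\mathbb Z[v,v^{-1}]$. Matrices are $\mathbb Z\times\mathbb Z$ of finite support; $\Xi(\infty,r)$: nonnegative integer matrices with entry sum $r$; $\Xi^\pm(\infty)$: nonnegative integer matrices with zero diagonal; $\sigma(A)$ the entry sum; $ro(A)$, $co(A)$ the row/column sum sequences. $\mathbb Z^\infty$, $\mathbb N^\infty$: finitely supported integer / nonnegative integer sequences indexed by $\mathbb Z$; $\sigma(\mathbf j)=\sum_ij_i$. $\mathcal K(\infty,r)$: for a finite field with $q$ elements and an $r$-dimensional space $V$, a $\mathbb Z$-step flag is $(V_i)_{i\in\mathbb Z}$, $V_i\subseteq V_{i+1}$, $V_i=0$ for $i\ll0$, $\bigcup V_i=V$; $GL(V)$-orbits $\mathcal O_A$ on pairs of flags correspond to $A\in\Xi(\infty,r)$ via $a_{ij}=\dim(V_{i-1}+V_i\cap V'_j)-\dim(V_{i-1}+V_i\cap V'_{j-1})$; for $(f_1,f_2)\in\mathcal O_C$ the number of $f$ with $(f_1,f)\in\mathcal O_A$, $(f,f_2)\in\mathcal O_B$ is $g_{A,B,C}|_{v^2=q}$ for some $g_{A,B,C}\in\mathbb Z[v^2]$. $\mathcal K(\infty,r)$ is the free $\mathcal Z$-module on $\{e_A\}_{A\in\Xi(\infty,r)}$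 with $e_Ae_B=\sum_Cg_{A,B,C}e_C$; $[A]=v^{-d_A}e_A$, $d_A=\sum_{i\ge k,j<l}a_{ij}a_{kl}$. $\widehat{\boldsymbol{\mathcal K}}(\infty,r)$ is the $\mathbb Q(v)$-algebra of formal sums $\sum_A\beta_A[A]$ such that for each $\lambda$ only finitely many $A$ with $\beta_A\ne0$ have $ro(A)=\lambda$ and only finitely many have $co(A)=\lambda$, with product extended bilinearly. For $A\in\Xi^\pm(\infty)$ and $\mathbf j\in\mathbb Z^\infty$, $A(\mathbf j,r)=\sum_{\lambda\in\mathbb N^\infty,\sigma(A)+\sigma(\lambda)=r}v^{\sum_i\lambda_ij_i}[A+\operatorname{diag}(\lambda)]$. $\mathbf V(\infty,r)$ is the $\mathbb Q(v)$-span of all $A(\mathbf j,r)$ with $A\in\Xi^\pm(\infty)$, $\mathbf j\in\mathbb Z^\infty$. *)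

(* Defs.v *)
From HB Require Import structures.
From mathcomp Require Import all_boot all_order all_algebra.
From mathcomp Require Import finmap fraction.
Set Implicit Arguments. Unset Strict Implicit. Unset Printing Implicit Defensive.
Import Order.TTheory GRing.Theory Num.Theory.
Local Open Scope fset_scope.
Local Open Scope ring_scope.

Definition Qv : fieldType := {fraction {poly rat}}.
Definition v : Qv := tofrac ('X : {poly rat}).

Definition mat := {fsfun int * int -> nat with 0%N}.
(* N^infty and Z^infty : finitely supported sequences indexed by Z. *)
Definition seqN := {fsfun int -> nat with 0%N}.
Definition seqZ := {fsfun int -> int with 0%Z}.

Definition sigma (A : mat) : nat := (\sum_(k <- finsupp A) A k)%N.
Definition sigmaN (l : seqN) : nat := (\sum_(i <- finsupp l) l i)%N.
Definition sigmaZ (j : seqZ) : int := \sum_(i <- finsupp j) j i.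

Definition Xipm (A : mat) : Prop := forall i : int, A (i, i) = 0%N.
(* j in N^infty, viewed inside Z^infty. *)
Definition nonneg_seq (j : seqZ) : Prop := forall i : int, (0 <= j i)%R.

Definition matD (A B : mat) : mat :=
  [fsfun k in finsupp A `|` finsupp B => (A k + B k)%N].
Definition diag (l : seqN) : mat :=
  [fsfun k in [fset (i, i) | i in finsupp l] => if k.1 == k.2 then l k.1 else 0%N].
Definition diag_of (M : mat) : seqN :=
  [fsfun i in [fset k.1 | k in finsupp M] => M (i, i)].

(* Elements of \hat K(infty, r) are formal sums  sum_M beta_M [M]; such a sum
   is represented by its coefficient function M |-> beta_M (vector space
   operations and equality are coefficientwise). *)
Definition fsum := mat -> Qv.

(* A(j, r) = sum_{lambda in N^infty, sigma(A)+sigma(lambda) = r}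
              v^(sum_i lambda_i j_i) [A + diag(lambda)].
   For A with zero diagonal, M = A + diag(lambda) forces lambda = diag_of M,
   so the coefficient of [M] is given as follows. *)
Definition Ajr (A : mat) (j : seqZ) (r : nat) : fsum := fun M =>
  let l := diag_of M in
  if (M == matD A (diag l)) && (sigma A + sigmaN l == r)%N
  then v ^ (\sum_(i <- finsupp l) (l i)%:Z * j i)
  else 0.

Definition in_V (r : nat) (x : fsum) : Prop :=
  exists s : seq (Qv * (mat * seqZ)),
    (forall p, p \in s -> Xipm p.2.1) /\
    forall M, x M = \sum_(p <- s) p.1 * Ajr p.2.1 p.2.2 r M.

Definition is_basis_of (I : eqType) (P : I -> Prop) (f : I -> fsum)
    (W : fsum -> Prop) : Prop :=
  [/\ (forall i, P i -> W (f i)),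
      (forall s : seq (Qv * I), uniq (map snd s) ->
         (forall p, p \in s -> P p.2) ->
         (forall M, \sum_(p <- s) p.1 * f p.2 M = 0) ->
         forall p, p \in s -> p.1 = 0)
    &
      (forall x, W x -> exists s : seq (Qv * I),
         (forall p, p \in s -> P p.2) /\
         forall M, x M = \sum_(p <- s) p.1 * f p.2 M)].

(* Main.v *)
Require Import Defs.
From mathcomp Require Import all_boot all_order all_algebra.
From mathcomp Require Import finmap fraction zify ring.
Set Implicit Arguments. Unset Strict Implicit. Unset Printing Implicit Defensive.
Import Order.TTheory GRing.Theory Num.Theory.
Local Open Scope fset_scope.
Local Open Scope ring_scope.
From Stdlib Require Import Classical.

Lemma matDE (A B : mat) k : matD A B k = (A k + B k)%N.
Proof.
rewrite /matD fsfunE; case: ifP => //; rewrite !inE => /norP[].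
by rewrite !memNfinsupp => /eqP -> /eqP ->.
Qed.

Lemma diagE (l : seqN) a b : diag l (a, b) = if a == b then l a else 0%N.
Proof.
rewrite /diag fsfunE; case: ifP => //= Hin; case: ifP => [/eqP Eab|//]; subst b.
rewrite fsfun_dflt //; apply/negP => Ha.
by move/negP: Hin; apply; apply/imfsetP; exists a.
Qed.

Lemma diag_ofE (M : mat) i : diag_of M i = M (i, i).
Proof.
rewrite /diag_of fsfunE; case: ifP => // Hin.
rewrite fsfun_dflt //; apply/negP => Ha.
by move/negP: Hin; apply; apply/imfsetP; exists (i, i).
Qed.

Lemma v_neq0 : v != 0.
Proof. by rewrite /v tofrac_eq0 polyX_eq0. Qed.

Lemma vX_inj (a b : nat) : v ^+ a = v ^+ b -> a = b.
Proof.
rewrite /v -!tofracXn => /eqP; rewrite tofrac_eq => /eqP E.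
have : size ('X^a : {poly rat}) = size ('X^b : {poly rat}) by rewrite E.
by rewrite !size_polyXn => -[].
Qed.

Definition addZ (j : seqZ) (i : int) (t : int) : seqZ :=
  [fsfun k in i |` finsupp j => j k + (if k == i then t else 0)].
Definition addN (l : seqN) (i : int) (t : nat) : seqN :=
  [fsfun k in i |` finsupp l => (l k + (if k == i then t else 0))%N].
Definition zeroZ : seqZ := [fsfun k in fset0 => 0%Z].
Definition zeroN : seqN := [fsfun k in fset0 => 0%N].

Lemma addZE j i t k : addZ j i t k = j k + (if k == i then t else 0).
Proof.
rewrite /addZ fsfunE; case: ifP => //; rewrite !inE => /norP[/negPf -> ].
by move=> H; rewrite fsfun_dflt // addr0.
Qed.

Lemma addNE l i t k : addN l i t k = (l k + (if k == i then t else 0))%N.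
Proof.
rewrite /addN fsfunE; case: ifP => //; rewrite !inE => /norP[/negPf -> ].
by move=> H; rewrite fsfun_dflt // addn0.
Qed.

Lemma zeroZE k : zeroZ k = 0. Proof. by rewrite /zeroZ fsfunE. Qed.
Lemma zeroNE k : zeroN k = 0%N. Proof. by rewrite /zeroN fsfunE. Qed.

Lemma finsupp_addZ j i t : finsupp (addZ j i t) `<=` i |` finsupp j.
Proof.
apply/fsubsetP => k; rewrite !inE; case: eqP => //= /eqP /negPf Hk.
by rewrite !mem_finsupp addZE Hk addr0.
Qed.

Lemma finsupp_addN l i t : finsupp (addN l i t) `<=` i |` finsupp l.
Proof.
apply/fsubsetP => k; rewrite !inE; case: eqP => //= /eqP /negPf Hk.
by rewrite !mem_finsupp addNE Hk addn0.
Qed.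

Lemma sumZS (j : seqZ) (S : {fset int}) : finsupp j `<=` S ->
  sigmaZ j = \sum_(i <- S) j i.
Proof.
move=> sub; apply: big_fset_incl => // x _ xN; exact: fsfun_dflt.
Qed.

Lemma sumNS (l : seqN) (S : {fset int}) : finsupp l `<=` S ->
  sigmaN l = (\sum_(i <- S) l i)%N.
Proof.
move=> sub; apply: big_fset_incl => // x _ xN; exact: fsfun_dflt.
Qed.

Definition dot (l : seqN) (j : seqZ) : int := \sum_(i <- finsupp l) (l i)%:Z * j i.

Lemma dotS l j (S : {fset int}) : finsupp l `<=` S ->
  dot l j = \sum_(i <- S) (l i)%:Z * j i.
Proof.
move=> sub; apply: big_fset_incl => // x _ xN; by rewrite fsfun_dflt //= mul0r.
Qed.

Definition g (j : seqZ) (l : seqN) : Qv := v ^ dot l j.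

Lemma AjrE A j r M : Ajr A j r M =
  if (M == matD A (diag (diag_of M))) && (sigma A + sigmaN (diag_of M) == r)%N
  then g j (diag_of M) else 0.
Proof. by []. Qed.

Lemma sum_delta (S : {fset int}) i (F : int -> int) : i \in S ->
  \sum_(k <- S) (if k == i then F k else 0) = F i.
Proof.
move=> iS; rewrite (big_fsetD1 i) //= eqxx big1_fset ?addr0 // => k.
by rewrite !inE => /andP[/negPf -> _].
Qed.

Lemma g_addN j l i t : g j (addN l i t) = v ^ (t%:Z * j i) * g j l.
Proof.
rewrite /g -expfzDr ?v_neq0 //; congr (v ^ _).
rewrite (@dotS _ _ (i |` finsupp l)) ?finsupp_addN //.
rewrite (@dotS l _ (i |` finsupp l)) ?fsubsetUr //.
under eq_bigr => k _ do rewrite addNE PoszD mulrDl.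
rewrite big_split /= addrC; congr (_ + _).
rewrite (eq_bigr (fun k => if k == i then t%:Z * j k else 0)); last first.
  by move=> k _; case: eqP => [->|]; rewrite ?mul0r.
by rewrite sum_delta // !inE eqxx.
Qed.

Lemma g_addZ j l i t : g (addZ j i t) l = v ^ ((l i)%:Z * t) * g j l.
Proof.
rewrite /g -expfzDr ?v_neq0 //; congr (v ^ _).
rewrite /dot.
under eq_bigr => k _ do rewrite addZE mulrDr.
rewrite big_split /= addrC; congr (_ + _).
case: (boolP (i \in finsupp l)) => iS.
  rewrite (eq_bigr (fun k => if k == i then (l k)%:Z * t else 0)); last first.
    by move=> k _; case: eqP => [->|]; rewrite ?mulr0.
  by rewrite sum_delta.
rewrite big1_fset; last first.
  move=> k kS _; case: eqP => [E|_]; last by rewrite mulr0.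
  by rewrite E (negPf iS) in kS.
by rewrite fsfun_dflt //= mul0r.
Qed.

Lemma g_zeroN j : g j zeroN = 1.
Proof.
rewrite /g /dot big1_fset ?expr0z // => k _ _; by rewrite zeroNE mul0r.
Qed.
Definition spanP (n : nat) (P : seqZ -> Prop) (F : seqN -> Qv) : Prop :=
  exists s : seq (Qv * seqZ), (forall p, p \in s -> P p.2) /\
    forall l, sigmaN l = n -> F l = \sum_(p <- s) p.1 * g p.2 l.

Lemma span_g n (P : seqZ -> Prop) j : P j -> spanP n P (g j).
Proof.
move=> Pj; exists [:: (1, j)]; split; first by move=> p; rewrite inE => /eqP ->.
by move=> l _; rewrite big_seq1 mul1r.
Qed.

Lemma span0 n P : spanP n P (fun _ => 0).
Proof. by exists [::]; split => // l _; rewrite big_nil. Qed.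

Lemma spanD n P F G : spanP n P F -> spanP n P G -> spanP n P (fun l => F l + G l).
Proof.
move=> [s1 [P1 E1]] [s2 [P2 E2]]; exists (s1 ++ s2); split.
  by move=> p; rewrite mem_cat => /orP[/P1|/P2].
by move=> l Hl; rewrite big_cat /= E1 // E2.
Qed.

Lemma spanZ n P F c : spanP n P F -> spanP n P (fun l => c * F l).
Proof.
move=> [s [Ps E]]; exists [seq (c * p.1, p.2) | p <- s]; split.
  by move=> p /mapP [q qs ->]; exact: (Ps q qs).
by move=> l Hl; rewrite E // big_map mulr_sumr; apply: eq_bigr => p _; rewrite mulrA.
Qed.

Lemma span_ext n P F G : (forall l, sigmaN l = n -> F l = G l) -> spanP n P F -> spanP n P G.
Proof.
move=> FG [s [Ps E]]; exists s; split => // l Hl; by rewrite -FG // E.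
Qed.

Lemma span_list n (P Q : seqZ -> Prop) (s : seq (Qv * seqZ)) :
  (forall p, p \in s -> P p.2) -> (forall j, P j -> spanP n Q (g j)) ->
  spanP n Q (fun l => \sum_(p <- s) p.1 * g p.2 l).
Proof.
move=> Ps PQ; elim: s Ps => [|p s IH] Ps.
  by apply: span_ext (span0 _ _) => l _; rewrite big_nil.
apply: span_ext (spanD (spanZ p.1 (PQ _ (Ps _ (mem_head _ _)))) (IH _)).
  by move=> l _; rewrite big_cons.
by move=> q qs; apply: Ps; rewrite inE qs orbT.
Qed.

Lemma span_trans n (P Q : seqZ -> Prop) F :
  spanP n P F -> (forall j, P j -> spanP n Q (g j)) -> spanP n Q F.
Proof.
move=> [s [Ps E]] PQ; apply: span_ext (span_list Ps PQ) => l Hl; by rewrite E.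
Qed.

Lemma sigma_addZ j i t : sigmaZ (addZ j i t) = sigmaZ j + t.
Proof.
rewrite (@sumZS _ (i |` finsupp j)) ?finsupp_addZ //.
rewrite (@sumZS j (i |` finsupp j)) ?fsubsetUr //.
under eq_bigr => k _ do rewrite addZE.
rewrite big_split /=; congr (_ + _).
rewrite (eq_bigr (fun k => if k == i then t else 0)) ?sum_delta ?inE ?eqxx //.
Qed.

Definition shift (b : seqZ) (ops : seq (int * nat)) : seqZ :=
  foldr (fun q acc => addZ acc q.1 1) b ops.

Lemma shift_ge (b : seqZ) (ops : seq (int * nat)) (i : int) : b i <= shift b ops i.
Proof.
elim: ops => [|q ops IH] //=; rewrite addZE; case: eqP => _; last by rewrite addr0.
by apply: (le_trans IH); rewrite lerDl.
Qed.

Lemma sigma_shift (b : seqZ) (ops : seq (int * nat)) : sigmaZ (shift b ops) = sigmaZ b + (size ops)%:Z.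
Proof.
elim: ops => [|q ops IH] /=; first by rewrite addr0.
by rewrite sigma_addZ IH -addrA -[(size ops).+1]addn1 PoszD.
Qed.

Definition Phi (ops : seq (int * nat)) (b : seqZ) (l : seqN) : Qv :=
  (\prod_(q <- ops) (v ^+ (l q.1) - v ^+ q.2)) * g b l.

Lemma g_addZ1 j l i : g (addZ j i 1) l = v ^+ (l i) * g j l.
Proof. by rewrite g_addZ mulr1. Qed.

Lemma Phi_exp (ops : seq (int * nat)) (b : seqZ) : exists s : seq (Qv * seqZ),
  (forall p, p \in s -> (forall i, b i <= p.2 i) /\ sigmaZ p.2 < sigmaZ (shift b ops)) /\
  forall l, Phi ops b l = g (shift b ops) l + \sum_(p <- s) p.1 * g p.2 l.
Proof.
elim: ops => [|[i k] ops [s [Ps E]]].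
  by exists [::]; split => // l; rewrite /Phi big_nil mul1r big_nil addr0.
set y0 := shift b ops.
exists ((- v ^+ k, y0) :: [seq (p.1, addZ p.2 i 1) | p <- s] ++
        [seq (- v ^+ k * p.1, p.2) | p <- s]); split.
  move=> p; rewrite inE mem_cat => /orP[/eqP -> /=|/orP[/mapP[q qs ->]|/mapP[q qs ->]]] /=.
  - by split; [exact: shift_ge | rewrite sigma_addZ ltrDl].
  - have [H1 H2] := Ps q qs; split.
      by move=> i'; apply: (le_trans (H1 i')); rewrite addZE; case: eqP; rewrite ?addr0 ?lerDl.
    by rewrite !sigma_addZ ltrD2r.
  - have [H1 H2] := Ps q qs; split => //.
    by rewrite sigma_addZ (lt_le_trans H2) // lerDl.
move=> l; rewrite /Phi big_cons /= -mulrA -/(Phi ops b l) E.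
rewrite big_cons big_cat !big_map /= g_addZ1.
rewrite [X in _ = _ + (_ + (X + _))](eq_bigr (fun p => v ^+ l i * (p.1 * g p.2 l))); last by move=> p _; rewrite g_addZ1 mulrCA.
rewrite [X in _ = _ + (_ + (_ + X))](eq_bigr (fun p => - v ^+ k * (p.1 * g p.2 l))); last by move=> p _; rewrite mulrA.
rewrite -!mulr_sumr /y0 mulrBl !mulrDr !mulNr opprD addrACA; by rewrite !addrA.
Qed.
Lemma sigmaZ_ge0 j : nonneg_seq j -> 0 <= sigmaZ j.
Proof. by move=> hj; apply: sumr_ge0 => i _; exact: hj. Qed.

Lemma zero_or (x : seqZ) : x = zeroZ \/ exists i, x i != 0.
Proof.
case: (classic (exists i, x i != 0)) => [|H]; [by right|left].
apply/fsfunP => k; rewrite zeroZE; apply/eqP/negPn/negP => Hk; apply: H; by exists k.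
Qed.

Lemma ops_for (x : seqZ) : nonneg_seq x -> exists ops : seq (int * nat),
  [/\ shift zeroZ ops = x,
      (forall q, q \in ops -> (q.2)%:Z < x q.1) &
      (forall y : int -> int, (forall i, 0 <= y i) -> (exists i, y i < x i) ->
         exists2 q, q \in ops & y q.1 = (q.2)%:Z)].
Proof.
move=> hx.
suff H : forall m : nat, forall x, nonneg_seq x -> sigmaZ x < m%:Z -> exists ops : seq (int * nat),
  [/\ shift zeroZ ops = x,
      (forall q, q \in ops -> (q.2)%:Z < x q.1) &
      (forall y : int -> int, (forall i, 0 <= y i) -> (exists i, y i < x i) ->
         exists2 q, q \in ops & y q.1 = (q.2)%:Z)].
  apply: (H (absz (sigmaZ x)).+1 x hx); have := sigmaZ_ge0 hx; lia.
clear hx; elim => [|m IH] {}x hx hs.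
  by have := sigmaZ_ge0 hx; lia.
case: (zero_or x) => [->|[i xi]].
  exists [::]; split => // y hy [i]; rewrite zeroZE => hi.
  by have := hy i; lia.
have xi0 : 0 < x i by rewrite lt_def xi hx.
set x' := addZ x i (-1).
have hx' : nonneg_seq x'.
  by move=> k; rewrite /x' addZE; case: eqP => [->|_]; [lia | rewrite addr0; exact: hx].
have hs' : sigmaZ x' < m%:Z by rewrite /x' sigma_addZ; lia.
have x'le : forall k, x' k <= x k.
  by move=> k; rewrite /x' addZE; case: eqP => _; lia.
have x'i : x' i = x i - 1 by rewrite /x' addZE eqxx.
have [ops [Esh Hlt Hv]] := IH x' hx' hs'.
exists ((i, absz (x' i)) :: ops); split.
- rewrite /= Esh; apply/fsfunP => k; rewrite !addZE; case: eqP => _; lia.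
- move=> q; rewrite inE => /orP[/eqP -> /=|qs].
    by rewrite gez0_abs ?hx' // x'i; lia.
  by apply: (lt_le_trans (Hlt q qs)).
- move=> y hy [i0 hi0].
  case: (classic (exists k, y k < x' k)) => [Hex|Hn].
    by have [q qs Eq] := Hv y hy Hex; exists q => //; rewrite inE qs orbT.
  have Hge : forall k, x' k <= y k.
    move=> k; rewrite leNgt; apply/negP => H; apply: Hn; by exists k.
  exists (i, absz (x' i)); first by rewrite mem_head.
  rewrite /= gez0_abs ?hx' //.
  have [E|Ne] := eqVneq i0 i.
    subst i0; have := Hge i; lia.
  have := Hge i0; rewrite /x' addZE (negPf Ne) addr0; lia.
Qed.

Lemma sum_le (x : seqZ) (l : seqN) : (forall i, x i <= (l i)%:Z) -> sigmaZ x <= (sigmaN l)%:Z.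
Proof.
move=> H; set S := finsupp x `|` finsupp l.
rewrite (@sumZS x S) ?fsubsetUl // (@sumNS l S) ?fsubsetUr //.
rewrite (big_morph Posz PoszD (erefl _)); exact: ler_sum.
Qed.

Lemma span_big n (x : seqZ) : nonneg_seq x -> n%:Z < sigmaZ x ->
  spanP n (fun y => nonneg_seq y /\ sigmaZ y < sigmaZ x) (g x).
Proof.
move=> hx hn; have [ops [Esh Hlt Hv]] := ops_for hx.
have [s [Ps E]] := Phi_exp ops zeroZ; rewrite Esh in Ps E.
exists [seq (- p.1, p.2) | p <- s]; split.
  move=> p /mapP[q qs ->] /=; have [H1 H2] := Ps q qs; split => // k.
  by have := H1 k; rewrite zeroZE.
move=> l Hl.
have : Phi ops zeroZ l = 0.
  rewrite /Phi; apply/eqP; rewrite mulf_eq0; apply/orP; left.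
  rewrite prodf_seq_eq0; apply/hasP.
  have hy : forall k, 0 <= (fun k => (l k)%:Z) k by [].
  have [|q qs Eq] := Hv (fun k => (l k)%:Z) hy.
    apply: NNPP => Hn; have : sigmaZ x <= (sigmaN l)%:Z.
      apply: sum_le => i; rewrite leNgt; apply/negP => H; apply: Hn; by exists i.
    rewrite Hl; lia.
  exists q => //=; move: Eq => /= /eqP; rewrite eqz_nat => /eqP ->; by rewrite subrr.
rewrite E big_map => /eqP; rewrite addr_eq0 => /eqP ->.
by rewrite -sumrN; apply: eq_bigr => p _; rewrite mulNr.
Qed.

Definition goodn (n : nat) (j : seqZ) : Prop := nonneg_seq j /\ sigmaZ j <= n%:Z.

Lemma span_nonneg n (x : seqZ) : nonneg_seq x -> spanP n (goodn n) (g x).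
Proof.
move=> hx.
suff H : forall m : nat, forall x, nonneg_seq x -> sigmaZ x < m%:Z -> spanP n (goodn n) (g x).
  apply: (H (absz (sigmaZ x)).+1 x hx); have := sigmaZ_ge0 hx; lia.
clear hx; elim => [|m IH] {}x hx hs.
  by have := sigmaZ_ge0 hx; lia.
case: (lerP (sigmaZ x) n%:Z) => hn; first by apply: span_g.
apply: span_trans (span_big hx hn) _ => y [hy hys]; apply: IH => //; lia.
Qed.
Definition Nn (x : seqZ) : int := \sum_(k <- finsupp x) ((absz (x k))%:Z - x k).

Lemma NnS (x : seqZ) (S : {fset int}) : finsupp x `<=` S ->
  Nn x = \sum_(k <- S) ((absz (x k))%:Z - x k).
Proof. move=> sub; apply: big_fset_incl => // k _ kN; rewrite fsfun_dflt //=. Qed.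

Lemma Nn_ge0 (x : seqZ) : 0 <= Nn x.
Proof. by apply: sumr_ge0 => k _; lia. Qed.

Lemma Nn_addZ (x : seqZ) (i t : int) : x i < 0 -> 0 < t -> Nn (addZ x i t) < Nn x.
Proof.
move=> hxi ht.
have iS : i \in finsupp x by rewrite mem_finsupp; apply/eqP => /= E; rewrite E in hxi.
have sub : finsupp (addZ x i t) `<=` finsupp x.
  apply/fsubsetP => k /(fsubsetP (finsupp_addZ x i t)); rewrite !inE => /orP[/eqP->|] //.
rewrite (NnS sub) (big_fsetD1 i iS) /Nn (big_fsetD1 i iS) /= addZE eqxx.
rewrite (@eq_fbigr _ _ _ _ _ _ _ (fun k => (absz (x k))%:Z - x k)); last first.
  by move=> k; rewrite !inE => /andP[/negPf Hk _] _; rewrite addZE Hk addr0.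
by rewrite ltrD2r; lia.
Qed.

Definition Pn (n : nat) : {poly Qv} := \prod_(k <- iota 0 n.+1) ('X - (v ^+ k)%:P).

Lemma size_Pn n : size (Pn n) = n.+2.
Proof. by rewrite /Pn size_prod_XsubC size_iota. Qed.

Lemma Pn_root n m : (m <= n)%N -> (Pn n).[v ^+ m] = 0.
Proof.
move=> hm; rewrite /Pn horner_prod; apply/eqP; rewrite prodf_seq_eq0; apply/hasP.
exists m; first by rewrite mem_iota; lia.
by rewrite /= hornerXsubC subrr eqxx.
Qed.

Lemma Pn_coef0 n : (Pn n)`_0 != 0.
Proof.
rewrite -horner_coef0 /Pn horner_prod prodf_seq_neq0; apply/allP => k _ /=.
by rewrite hornerXsubC sub0r oppr_eq0 expf_neq0 // v_neq0.
Qed.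

Lemma le_sigmaN (l : seqN) i : (l i <= sigmaN l)%N.
Proof.
case: (boolP (i \in finsupp l)) => iS.
  by rewrite /sigmaN (big_fsetD1 i) //= leq_addr.
by rewrite fsfun_dflt.
Qed.

Lemma g_addZn (x : seqZ) (l : seqN) (i : int) (t : nat) : g (addZ x i t%:Z) l = (v ^+ (l i)) ^+ t * g x l.
Proof. by rewrite g_addZ -PoszM -exprM. Qed.

Lemma addZ0 (x : seqZ) (i : int) : addZ x i 0 = x.
Proof. by apply/fsfunP => k; rewrite addZE; case: eqP; rewrite addr0. Qed.

Lemma rel_neg n (x : seqZ) (l : seqN) (i : int) : sigmaN l = n ->
  (Pn n)`_0 * g x l + \sum_(0 <= t < n.+1) (Pn n)`_t.+1 * g (addZ x i t.+1%:Z) l = 0.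
Proof.
move=> hl.
have H : \sum_(0 <= t < n.+2) (Pn n)`_t * g (addZ x i t%:Z) l = 0.
  rewrite big_mkord -(size_Pn n).
  under eq_bigr => t _ do rewrite g_addZn mulrA.
  by rewrite -mulr_suml -horner_coef Pn_root ?mul0r // -hl le_sigmaN.
by rewrite big_nat_recl // addZ0 in H.
Qed.

Lemma span_neg n (x : seqZ) : spanP n (goodn n) (g x).
Proof.
suff H : forall m : nat, forall x, Nn x < m%:Z -> spanP n (goodn n) (g x).
  apply: (H (absz (Nn x)).+1 x); have := Nn_ge0 x; lia.
elim => [|m IH] {}x hN.
  by have := Nn_ge0 x; lia.
case: (boolP (has (fun k => x k < 0) (finsupp x))) => [/hasP[i iS hi]|Hn].
  pose s := [seq (- ((Pn n)`_0)^-1 * (Pn n)`_t.+1, addZ x i t.+1%:Z) | t <- iota 0 n.+1].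
  apply: (@span_trans n (fun y => Nn y < m%:Z)).
    exists s; split.
      move=> p /mapP[t _ ->] /=; have := Nn_addZ (t:=t.+1%:Z) hi isT; lia.
    move=> l hl; rewrite big_map.
    have R := rel_neg x i hl.
    rewrite (eq_bigr (fun t => - ((Pn n)`_0)^-1 * ((Pn n)`_t.+1 * g (addZ x i t.+1%:Z) l)));
      last by move=> t _; rewrite mulrA.
    rewrite -mulr_sumr -[iota 0 n.+1]/(index_iota 0 n.+1).
    move/eqP: R; rewrite addrC addr_eq0 => /eqP ->.
    by rewrite mulNr mulrN opprK mulrA mulVf ?Pn_coef0 ?mul1r.
  by move=> y hy; apply: IH.
apply: span_nonneg => k; case: (boolP (k \in finsupp x)) => kS.
  by move/hasPn: Hn => /(_ k kS); rewrite -leNgt.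
by rewrite fsfun_dflt.
Qed.
Lemma sum_deltaN (S : {fset int}) i (F : int -> nat) : i \in S ->
  (\sum_(k <- S) (if k == i then F k else 0))%N = F i.
Proof.
move=> iS; rewrite (big_fsetD1 i) //= eqxx big1_fset ?addn0 // => k.
by rewrite !inE => /andP[/negPf -> _].
Qed.

Lemma sigma_addN (l : seqN) (i : int) (t : nat) : sigmaN (addN l i t) = (sigmaN l + t)%N.
Proof.
rewrite (@sumNS _ (i |` finsupp l)) ?finsupp_addN //.
rewrite (@sumNS l (i |` finsupp l)) ?fsubsetUr //.
under eq_bigr => k _ do rewrite addNE.
rewrite big_split /=; congr (_ + _)%N.
by rewrite sum_deltaN // !inE eqxx.
Qed.

Lemma sigmaZ_zero : sigmaZ zeroZ = 0.
Proof. by rewrite /sigmaZ big1_fset // => k _ _; rewrite zeroZE. Qed.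

Lemma sigmaN_zero : sigmaN zeroN = 0%N.
Proof. by rewrite /sigmaN big1_fset // => k _ _; rewrite zeroNE. Qed.

Lemma uniq_snd (A B : eqType) (s : seq (A * B)) p p' : uniq (map snd s) ->
  p \in s -> p' \in s -> p.2 = p'.2 -> p = p'.
Proof.
elim: s => [|a s IH] //= /andP[aN us]; rewrite !inE.
move=> /orP[/eqP ->|ps] /orP[/eqP ->|p's] E //.
- by move: aN; rewrite E (map_f snd p's).
- by move: aN; rewrite -E (map_f snd ps).
- exact: IH.
Qed.

Definition Hsum (s : seq (Qv * seqZ)) (ops : seq (int * nat)) (mu : seqN) : Qv :=
  \sum_(p <- s) p.1 * (\prod_(q <- ops) (v ^ (p.2 q.1) - v ^+ q.2)) * g p.2 mu.

Lemma Hsum_cons s i k ops mu :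
  Hsum s ((i, k) :: ops) mu = Hsum s ops (addN mu i 1) - v ^+ k * Hsum s ops mu.
Proof.
rewrite /Hsum mulr_sumr -sumrB; apply: eq_bigr => p _.
rewrite big_cons g_addN mul1r /=; set P := \prod_(q <- ops) _.
move: (p.1) P (v ^ p.2 i) (v ^+ k) (g p.2 mu) => x y z w u; ring.
Qed.

Section Indep.
Variables (n : nat) (s : seq (Qv * seqZ)).
Hypotheses (us : uniq (map snd s)) (gs : forall p, p \in s -> goodn n p.2)
  (H0 : forall l, sigmaN l = n -> \sum_(p <- s) p.1 * g p.2 l = 0).

Let maxs : nat := (\max_(p <- s) \max_(k <- finsupp p.2) absz k)%N.

Lemma fresh_z p : p \in s -> p.2 (Posz maxs.+1) = 0.
Proof.
move=> ps; apply: fsfun_dflt; apply/negP => zS.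
have h1 := @leq_bigmax_seq _ _ xpredT (fun k : int => absz k) _ zS isT.
have h2 := @leq_bigmax_seq _ _ xpredT (fun p : Qv * seqZ => (\max_(k <- finsupp p.2) absz k)%N) _ ps isT.
have := leq_trans h1 h2; rewrite -/maxs /=; lia.
Qed.

Lemma stepA l : (sigmaN l <= n)%N -> \sum_(p <- s) p.1 * g p.2 l = 0.
Proof.
move=> hl; rewrite -[RHS](H0 (l := addN l (Posz maxs.+1) (n - sigmaN l))).
  apply: eq_big_seq => p ps.
  by rewrite g_addN fresh_z // mulr0 expr0z mul1r.
by rewrite sigma_addN; lia.
Qed.

Lemma stepB ops mu : (sigmaN mu + size ops <= n)%N -> Hsum s ops mu = 0.
Proof.
elim: ops mu => [|[i k] ops IH] mu hmu.
  rewrite /Hsum -[RHS](stepA (l := mu)); last by rewrite addn0 in hmu.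
  by apply: eq_bigr => p _; rewrite big_nil mulr1.
rewrite Hsum_cons !IH ?mulr0 ?subr0 //; rewrite ?sigma_addN /= in hmu *; lia.
Qed.

Lemma stepC p0 : p0 \in s -> (forall p, p \in s -> sigmaZ p0.2 < sigmaZ p.2 -> p.1 = 0) ->
  p0.1 = 0.
Proof.
move=> p0s Hgt; have [hj0 hj0n] := gs p0s.
have [ops [Esh Hlt Hv]] := ops_for hj0.
have szops : (size ops)%:Z = sigmaZ p0.2 by rewrite -Esh sigma_shift sigmaZ_zero add0r.
have := stepB (ops := ops) (mu := zeroN); rewrite sigmaN_zero add0n.
move/(_ (ltac:(lia))); rewrite /Hsum.
rewrite (bigD1_seq p0) //=; last by apply: (map_uniq us).
rewrite g_zeroN mulr1 [X in _ + X = 0 -> _]big1_seq; last first.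
  move=> p /andP[pne ps].
  have p2ne : p.2 != p0.2.
    by apply/eqP => E; move/eqP: pne; apply; exact: (uniq_snd us ps p0s E).
  case: (ltrP (sigmaZ p0.2) (sigmaZ p.2)) => hs; first by rewrite Hgt // !mul0r.
  have [hj hjn] := gs ps.
  have [i hi] : exists i, p.2 i < p0.2 i.
    apply: NNPP => Hn; move/eqP: p2ne; apply.
    have Hge : forall i, p0.2 i <= p.2 i.
      move=> i; rewrite leNgt; apply/negP => H; apply: Hn; by exists i.
    set S := finsupp p.2 `|` finsupp p0.2.
    have E0 : \sum_(i <- S) (p.2 i - p0.2 i) = 0.
      apply/eqP; rewrite eq_le; apply/andP; split; last by apply: sumr_ge0 => i _; rewrite subr_ge0.
      by rewrite sumrB -(@sumZS p.2 S) ?fsubsetUl // -(@sumZS p0.2 S) ?fsubsetUr // subr_le0.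
    apply/fsfunP => k; case: (boolP (k \in S)) => kS.
      move/eqP: E0; rewrite psumr_eq0 => [/allP /(_ k kS) /=|i _]; last by rewrite subr_ge0.
      by rewrite subr_eq0 => /eqP.
    by rewrite !fsfun_dflt // -?/S; apply: contra kS; rewrite !inE => ->; rewrite ?orbT.
  have [q qs Eq] := Hv (fun k => p.2 k) hj (ex_intro _ i hi).
  apply/eqP; rewrite !mulf_eq0; apply/orP; left; apply/orP; right.
  rewrite prodf_seq_eq0; apply/hasP; exists q => //=; by rewrite Eq subrr.
rewrite addr0 => /eqP; rewrite mulf_eq0 => /orP[/eqP //|].
rewrite prodf_seq_eq0 => /hasP[q qs /= /eqP].
have h := Hlt q qs; rewrite -(gez0_abs (hj0 q.1)).
move/eqP; rewrite subr_eq0 => /eqP /vX_inj E.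
by move: h; rewrite -(gez0_abs (hj0 q.1)) E ltxx.
Qed.

Lemma indep_core p : p \in s -> p.1 = 0.
Proof.
suff H : forall m : nat, forall p, p \in s -> n%:Z - m%:Z < sigmaZ p.2 -> p.1 = 0.
  move=> ps; apply: (H n.+1 p ps); have := sigmaZ_ge0 (gs ps).1; lia.
elim => [|m IH] p' ps hp.
  by have := (gs ps).2; lia.
apply: stepC => // p'' p''s hlt; apply: IH => //; lia.
Qed.

End Indep.
Lemma Ajr_lift A j r (s : seq (Qv * seqZ)) :
  (forall l, sigmaN l = (r - sigma A)%N -> g j l = \sum_(p <- s) p.1 * g p.2 l) ->
  forall M, Ajr A j r M = \sum_(p <- s) p.1 * Ajr A p.2 r M.
Proof.
move=> H M; rewrite AjrE; under eq_bigr => p _ do rewrite AjrE.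
case: ifP => [/andP[_ /eqP hs]|_]; last by rewrite big1 // => p _; rewrite mulr0.
by rewrite H //; lia.
Qed.

Lemma Ajr_big A j r M : (r < sigma A)%N -> Ajr A j r M = 0.
Proof. by move=> h; rewrite AjrE; case: ifP => // /andP[_ /eqP]; lia. Qed.

Lemma span_V r (s : seq (Qv * (mat * seqZ))) : (forall p, p \in s -> Xipm p.2.1) ->
  exists s' : seq (Qv * (mat * seqZ)),
    (forall p, p \in s' -> [/\ Xipm p.2.1, nonneg_seq p.2.2 & sigmaZ p.2.2 + (sigma p.2.1)%:Z <= r%:Z]) /\
    forall M, \sum_(p <- s) p.1 * Ajr p.2.1 p.2.2 r M = \sum_(p <- s') p.1 * Ajr p.2.1 p.2.2 r M.
Proof.
elim: s => [|[c [A j]] s IH] Xs; first by exists [::].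
have Xs' : forall p, p \in s -> Xipm p.2.1 by move=> p ps; apply: Xs; rewrite inE ps orbT.
have [s' [Ps' E']] := IH Xs'.
have XA : Xipm A := Xs _ (mem_head _ _).
case: (leqP (sigma A) r) => hA.
  have [s1 [g1 E1]] := span_neg (r - sigma A) j.
  exists ([seq (c * q.1, (A, q.2)) | q <- s1] ++ s'); split.
    move=> p; rewrite mem_cat => /orP[/mapP[q qs ->]|/Ps'] //=.
    have [h1 h2] := g1 q qs; split => //. move: h2 hA. move: (sigmaZ q.2) (sigma A) => a b. lia.
  move=> M; rewrite big_cons big_cat big_map /= E' (Ajr_lift E1) mulr_sumr.
  by congr (_ + _); apply: eq_bigr => q _; rewrite mulrA.
exists s'; split => // M; by rewrite big_cons /= Ajr_big // mulr0 add0r E'.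
Qed.

Lemma Ajr_at A0 A j r l : Xipm A0 -> Xipm A -> sigmaN l = (r - sigma A0)%N ->
  (sigma A0 <= r)%N -> Ajr A j r (matD A0 (diag l)) = if A == A0 then g j l else 0.
Proof.
move=> hA0 hA hl hr.
have dl : diag_of (matD A0 (diag l)) = l.
  by apply/fsfunP => k; rewrite diag_ofE matDE diagE eqxx hA0.
rewrite AjrE dl; have [->|ne] := eqVneq A A0.
  rewrite eqxx /=; case: ifP => //; rewrite hl; move/negP; case; apply/eqP; lia.
case: ifP => // /andP[/eqP E _]; case/eqP: ne; apply/fsfunP => k.
have := congr1 (fun M : mat => M k) E; rewrite !matDE /=; lia.
Qed.

Theorem proposition6p8 (r : nat) :
  is_basis_of
    (fun Aj : mat * seqZ =>
       [/\ Xipm Aj.1, nonneg_seq Aj.2 & sigmaZ Aj.2 + (sigma Aj.1)%:Z <= r%:Z])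
    (fun Aj : mat * seqZ => Ajr Aj.1 Aj.2 r)
    (in_V r).
Proof.
split.
- move=> [A j] [hA hj hs]; exists [:: (1, (A, j))]; split.
    by move=> p; rewrite inE => /eqP ->.
  by move=> M; rewrite big_seq1 mul1r.
- move=> s us Ps H0 p0 p0s.
  set A0 := p0.2.1.
  have [hA0 hj0 hs0] := Ps p0 p0s.
  have sA0 : (sigma A0 <= r)%N.
    move: hs0 (sigmaZ_ge0 hj0); rewrite -/A0.
    move: (sigmaZ p0.2.2) (sigma A0) => a b; lia.
  pose s0 := [seq (p.1, p.2.2) | p <- s & p.2.1 == A0].
  have := @indep_core (r - sigma A0) s0 _ _ _ (p0.1, p0.2.2); apply.
  + have -> : [seq q.2 | q <- s0] =
       [seq ab.2 | ab <- [seq ab <- [seq p.2 | p <- s] | ab.1 == A0]].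
      by rewrite /s0 filter_map -!map_comp.
    rewrite map_inj_in_uniq ?filter_uniq //.
    move=> [a b] [c d]; rewrite !mem_filter /= => /andP[/eqP -> _] /andP[/eqP -> _] -> //.
  + move=> q /mapP[p]; rewrite mem_filter => /andP[/eqP hp ps] -> /=.
    have [h1 h2 h3] := Ps p ps; split => //.
    move: h3; rewrite hp; move: (sigmaZ p.2.2) (sigma A0) sA0 => a b; lia.
  + move=> l hl; rewrite -[RHS](H0 (matD A0 (diag l))).
    rewrite /s0 big_map big_filter big_mkcond /=; apply: eq_big_seq => p ps.
    have [h1 h2 h3] := Ps p ps.
    by rewrite Ajr_at //; case: ifP => _; rewrite ?mulr0.
  + by apply/mapP; exists p0; rewrite // mem_filter eqxx p0s.
- move=> x [s [Xs E]]; have [s' [Ps' E']] := @span_V r s Xs.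
  by exists s'; split => // M; rewrite E E'.
Qed.
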